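(* Let $m\neq n$ be positive integers and let $g,h$ be homeomorphisms of $\mathbb{R}$ satisfying $gh^mg^{-1}=h^n$. If $h$ has no fixed point, then $g$ has a fixed point. *)

(* Defs.v *)
From Stdlib Require Import Reals.
Open Scope R_scope.

Definition is_homeo (f finv : R -> R) : Prop :=
  continuity f /\ continuity finv /\
  (forall x, finv (f x) = x) /\ (forall y, f (finv y) = y).

Definition iterR (k : nat) (f : R -> R) : R -> R := Nat.iter k f.

(* Main.v *)
Require Import Defs.
From Stdlib Require Import Reals.
From Stdlib Require Import Lra Lia.
Open Scope R_scope.

Lemma sign_lemma (f : R -> R) : continuity f -> (forall x, f x <> x) ->
  (forall x, f x > x) \/ (forall x, f x < x).
Proof.
  intros Hc Hn.
  assert (Hc' : continuity (fun x => f x - x)).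
  { apply continuity_minus; [exact Hc| apply derivable_continuous, derivable_id]. }
  assert (key : forall x y, f x > x -> f y < y -> False).
  { intros x y Hx Hy.
    destruct (Rle_dec x y) as [Hle|Hle].
    - destruct (IVT_cor _ x y Hc' Hle) as [z [_ Hz]].
      + assert (0 <= (f x - x) * (y - f y)) by (apply Rmult_le_pos; lra). nra.
      + apply (Hn z); lra.
    - destruct (IVT_cor _ y x Hc') as [z [_ Hz]]; [lra| |].
      + assert (0 <= (f x - x) * (y - f y)) by (apply Rmult_le_pos; lra). nra.
      + apply (Hn z); lra. }
  destruct (Rlt_dec (f 0) 0) as [H0|H0].
  - right. intros x. destruct (Rtotal_order (f x) x) as [H|[H|H]]; auto.
    + exfalso; apply (Hn x H).
    + exfalso; apply (key x 0); lra.
  - left. intros x. assert (f 0 <> 0) by apply Hn.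
    destruct (Rtotal_order (f x) x) as [H1|[H1|H1]]; auto.
    + exfalso; apply (key 0 x); lra.
    + exfalso; apply (Hn x H1).
Qed.

Lemma incr_lemma (h : R -> R) : continuity h -> (forall x y, h x = h y -> x = y) ->
  (forall x, h x > x) -> forall x y, x < y -> h x < h y.
Proof.
  intros Hc Hi Hg x y Hxy.
  destruct (Rtotal_order (h x) (h y)) as [H|[H|H]]; auto.
  - apply Hi in H; lra.
  - exfalso. set (t := Rmax y (h x)).
    assert (Ht1 : y <= t) by apply Rmax_l.
    assert (Ht2 : h x <= t) by apply Rmax_r.
    assert (Hht := Hg t).
    assert (Hc' : continuity (fun z => h z - h x)).
    { apply continuity_minus; [exact Hc| apply continuity_const; intros ? ?; reflexivity]. }
    destruct (IVT_cor _ y t Hc' Ht1) as [w [Hw1 Hw2]].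
    + assert (0 <= (h x - h y) * (h t - h x)) by (apply Rmult_le_pos; lra). nra.
    + assert (w = x) by (apply Hi; lra). lra.
Qed.

Lemma iter_S (k : nat) (f : R -> R) x : iterR (S k) f x = f (iterR k f x).
Proof. reflexivity. Qed.

Lemma iter_add (p q : nat) (f : R -> R) x : iterR (p + q) f x = iterR p f (iterR q f x).
Proof. unfold iterR. apply Nat.iter_add. Qed.

Lemma core (h G : R -> R) (a b : nat) :
  continuity h -> (forall x y, h x = h y -> x = y) -> (forall x, h x > x) ->
  (forall x, G x > x) -> (b < a)%nat ->
  (forall x, G (iterR a h x) = iterR b h (G x)) -> False.
Proof.
  intros Hc Hi Hg HG Hab HR.
  assert (Hinc := incr_lemma h Hc Hi Hg).
  assert (Hitinc : forall k x y, x < y -> iterR k h x < iterR k h y).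
  { induction k; intros x y Hxy; simpl; auto. }
  assert (Hmon : forall d j x, iterR j h x <= iterR (d + j) h x).
  { induction d; intros j x; simpl. lra. specialize (IHd j x).
    specialize (Hg (iterR (d + j) h x)). unfold iterR in *. simpl. lra. }
  assert (Hunb : forall x y, exists c, y < iterR c h x).
  { intros x y. apply Classical_Prop.NNPP. intros Hno.
    assert (Hb : forall c, iterR c h x <= y).
    { intros c. destruct (Rle_dec (iterR c h x) y); auto. exfalso; apply Hno; exists c; lra. }
    destruct (growing_cv (fun k => iterR k h x)) as [l Hl].
    - intros k. specialize (Hg (iterR k h x)). unfold iterR in *. simpl. lra.
    - exists y. intros z [i ->]. apply Hb.
    - assert (H1 := continuity_seq h _ l (Hc l) Hl).
      assert (H2 : Un_cv (fun i => h (iterR i h x)) l).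
      { intros eps He. destruct (Hl eps He) as [N HN]. exists N. intros n Hn.
        apply (HN (S n)). lia. }
      assert (h l = l) by (eapply UL_sequence; eauto). specialize (Hg l). lra. }
  assert (Hit : forall k x, G (iterR (a * k) h x) = iterR (b * k) h (G x)).
  { induction k; intros x. simpl. rewrite !Nat.mul_0_r. reflexivity.
    replace (a * S k)%nat with (a * k + a)%nat by lia.
    replace (b * S k)%nat with (b * k + b)%nat by lia.
    rewrite !iter_add, IHk, HR. reflexivity. }
  destruct (Hunb 0 (G 0)) as [c Hc0].
  assert (E1 := HG (iterR (a * c) h 0)).
  rewrite Hit in E1.
  assert (E2 := Hitinc (b * c)%nat _ _ Hc0).
  rewrite <- iter_add in E2.
  assert (E3 := Hmon (a * c - (b * c + c))%nat (b * c + c)%nat 0).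
  replace (a * c - (b * c + c) + (b * c + c))%nat with (a * c)%nat in E3 by nia.
  lra.
Qed.

Definition Rel (g h : R -> R) (m n : nat) := forall x, g (iterR m h x) = iterR n h (g x).
Definition flip (f : R -> R) := fun x => - f (- x).

Lemma L1 g ginv h m n : (forall x, ginv (g x) = x) -> (forall y, g (ginv y) = y) ->
  Rel g h m n -> Rel ginv h n m.
Proof.
  intros H1 H2 HR x. rewrite <- (H2 x) at 1. rewrite <- HR. apply H1.
Qed.

Lemma iter_inv h hinv (H1 : forall x, hinv (h x) = x) (H2 : forall y, h (hinv y) = y) :
  forall k x, iterR k h (iterR k hinv x) = x /\ iterR k hinv (iterR k h x) = x.
Proof.
  induction k; intros x; [split; reflexivity|].
  split.
  - assert (E : forall f y, iterR (S k) f y = iterR k f (f y)).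
    { intros f y. replace (S k) with (k + 1)%nat by lia. apply iter_add. }
    rewrite E, iter_S, H2. apply IHk.
  - assert (E : forall f y, iterR (S k) f y = iterR k f (f y)).
    { intros f y. replace (S k) with (k + 1)%nat by lia. apply iter_add. }
    rewrite E, iter_S, H1. apply IHk.
Qed.

Lemma L2 g h hinv m n : (forall x, hinv (h x) = x) -> (forall y, h (hinv y) = y) ->
  Rel g h m n -> Rel g hinv m n.
Proof.
  intros H1 H2 HR x.
  destruct (iter_inv h hinv H1 H2 m x) as [A _].
  rewrite <- (proj2 (iter_inv h hinv H1 H2 n (g (iterR m hinv x)))).
  rewrite <- HR, A. reflexivity.
Qed.

Lemma iter_flip h k x : iterR k (flip h) x = - iterR k h (- x).
Proof.
  induction k; simpl. lra. unfold iterR in *. simpl. rewrite IHk. unfold flip.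
  rewrite Ropp_involutive. reflexivity.
Qed.

Lemma L3 g h m n : Rel g h m n -> Rel (flip g) (flip h) m n.
Proof.
  intros HR x. rewrite !iter_flip. unfold flip. rewrite !Ropp_involutive.
  rewrite HR. reflexivity.
Qed.

Lemma flip_cont f : continuity f -> continuity (flip f).
Proof.
  intros Hc. unfold flip. apply continuity_opp.
  apply (continuity_comp (fun x => - x) f). apply continuity_opp, derivable_continuous, derivable_id.
  exact Hc.
Qed.

Lemma Fcase h hinv g ginv m n :
  continuity h -> continuity hinv ->
  (forall x, hinv (h x) = x) -> (forall y, h (hinv y) = y) ->
  (forall x, ginv (g x) = x) -> (forall y, g (ginv y) = y) ->
  (forall x, h x > x) -> Rel g h m n -> m <> n ->
  (forall x, g x > x) \/ (forall x, g x < x) -> False.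
Proof.
  intros Hhc Hic Hh1 Hh2 Hg1 Hg2 Hgt HR Hmn Hs.
  assert (hinj : forall x y, h x = h y -> x = y).
  { intros x y E. rewrite <- (Hh1 x), <- (Hh1 y), E. reflexivity. }
  assert (fhc : continuity (flip hinv)) by (apply flip_cont; auto).
  assert (fhinj : forall x y, flip hinv x = flip hinv y -> x = y).
  { unfold flip. intros x y E. assert (hinv (-x) = hinv (-y)) by lra.
    assert (h (hinv (-x)) = h (hinv (-y))) by congruence. rewrite !Hh2 in *. lra. }
  assert (fhgt : forall x, flip hinv x > x).
  { intros x. unfold flip. specialize (Hgt (hinv (-x))). rewrite Hh2 in Hgt. lra. }
  destruct (proj1 (Nat.lt_gt_cases m n) Hmn) as [Hlt|Hlt];
  destruct Hs as [Hs|Hs].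
  -
    apply (core (flip hinv) (flip ginv) n m fhc fhinj fhgt); auto.
    + intros x. unfold flip. specialize (Hs (ginv (-x))). rewrite Hg2 in Hs. lra.
    + apply L3; apply L2 with h; auto. apply L1 with g; auto.
  - apply (core h ginv n m Hhc hinj Hgt); auto.
    + intros x. specialize (Hs (ginv x)). rewrite Hg2 in Hs. lra.
    + apply L1 with g; auto.
  - apply (core h g m n Hhc hinj Hgt); auto.
  - apply (core (flip hinv) (flip g) m n fhc fhinj fhgt); auto.
    + intros x. unfold flip. specialize (Hs (-x)). lra.
    + apply L3; apply L2 with h; auto.
Qed.

Theorem lemma5p6 (m n : nat) (g ginv h : R -> R) :
  (0 < m)%nat -> (0 < n)%nat -> m <> n ->
  is_homeo g ginv -> (exists hinv, is_homeo h hinv) ->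
  (forall x, g (iterR m h (ginv x)) = iterR n h x) ->
  (forall x, h x <> x) ->
  exists x, g x = x.
Proof.
  intros Hm Hn Hmn [Hgc [Hgic [Hg1 Hg2]]] [hinv [Hhc [Hic [Hh1 Hh2]]]] Hrel Hfix.
  apply Classical_Prop.NNPP. intros Hno.
  assert (Hgn : forall x, g x <> x) by (intros x E; apply Hno; exists x; exact E).
  assert (HR : Rel g h m n).
  { intros x. rewrite <- (Hg1 x) at 1. rewrite Hrel. reflexivity. }
  assert (Hs := sign_lemma g Hgc Hgn).
  destruct (sign_lemma h Hhc Hfix) as [Hh|Hh].
  - exact (Fcase h hinv g ginv m n Hhc Hic Hh1 Hh2 Hg1 Hg2 Hh HR Hmn Hs).
  - apply (Fcase (flip h) (flip hinv) (flip g) (flip ginv) m n); auto using flip_cont.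
    + intros x; unfold flip; rewrite Ropp_involutive, Hh1; lra.
    + intros x; unfold flip; rewrite Ropp_involutive, Hh2; lra.
    + intros x; unfold flip; rewrite Ropp_involutive, Hg1; lra.
    + intros x; unfold flip; rewrite Ropp_involutive, Hg2; lra.
    + intros x; unfold flip; specialize (Hh (-x)); lra.
    + apply L3; auto.
    + destruct Hs as [Hs|Hs]; [right|left]; intros x; unfold flip; specialize (Hs (-x)); lra.
Qed.
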